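(* Consider an RBM with observed variables $X\in\{-1,1\}^n$ and parameters $J,h,g$ as in the context. Fix an observed variable $u$ and subsets $I,S\subseteq[n]$ such that $\{u\},I,S$ are pairwise disjoint, and assignments $x_u,x_I,x_S$. Then \[\nu_{u,I|S}(x_u,x_I|x_S)=\Big|\sum_{q\in\{-1,1\}^m}\bar f(q,x_u,x_S)\prod_{i\in I}\sigma(2x_i(J^{(i)}\cdot q+h_i))\Big|,\] where \[\bar f(q,x_u,x_S)=\lambda(q,x_S)\Big[\sigma(2x_u(J^{(u)}\cdot q+h_u))-\mathbb{E}_{q'\sim\lambda(\cdot,x_S)}\sigma(2x_u(J^{(u)}\cdot q'+h_u))\Big],\] \[\lambda(q,x_S)=\frac{e^{g\cdot q}\prod_{i\in S}e^{x_i(J^{(i)}\cdot q+h_i)}\prod_{i\in[n]\setminus S}\cosh(J^{(i)}\cdot q+h_i)}{\sum_{q'\in\{-1,1\}^m}e^{g\cdot q'}\prod_{i\in S}e^{x_i(J^{(i)}\cdot q'+h_i)}\prod_{i\in[n]\setminus S}\cosh(J^{(i)}\cdot q'+h_i)}.\]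
   Context: RBM: $\mathbb{P}(X=x,Y=y)\propto\exp(x^TJy+h^Tx+g^Ty)$ over observed $X\in\{-1,1\}^n$, latent $Y\in\{-1,1\}^m$, $J\in\mathbb{R}^{n\times m}$, $h\in\mathbb{R}^n$, $g\in\mathbb{R}^m$; probabilities refer to the marginal of $X$. $J^{(i)}$ is the $i$-th row of $J$, $\sigma(t)=1/(1+e^{-t})$. $\nu_{u,I|S}(x_u,x_I|x_S):=|\mathbb{P}(X_u=x_u,X_I=x_I|X_S=x_S)-\mathbb{P}(X_u=x_u|X_S=x_S)\mathbb{P}(X_I=x_I|X_S=x_S)|$. $\mathbb{E}_{q'\sim\lambda(\cdot,x_S)}$ denotes expectation over $q'\in\{-1,1\}^m$ drawn with probability $\lambda(q',x_S)$. *)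

(* Defs.v *)
From HB Require Import structures.
From mathcomp Require Import all_boot all_order all_algebra.
From mathcomp Require Import all_classical all_reals all_analysis.
Set Implicit Arguments. Unset Strict Implicit. Unset Printing Implicit Defensive.
Import Order.TTheory GRing.Theory Num.Theory.
Local Open Scope ring_scope.

Section RBM.
Variable R : realType.

Definition spin (b : bool) : R := if b then 1 else -1.

Definition cosh (t : R) : R := (expR t + expR (- t)) / 2.
Definition sigmoid (t : R) : R := 1 / (1 + expR (- t)).

Variables (n m : nat) (J : 'I_n -> 'I_m -> R) (h : 'I_n -> R) (g : 'I_m -> R).

Definition field (i : 'I_n) (q : {ffun 'I_m -> bool}) : R :=
  \sum_(j < m) J i j * spin (q j) + h i.

Definition weight (x : {ffun 'I_n -> bool}) (y : {ffun 'I_m -> bool}) : R :=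
  expR (\sum_(i < n) \sum_(j < m) spin (x i) * J i j * spin (y j)
        + \sum_(i < n) h i * spin (x i) + \sum_(j < m) g j * spin (y j)).

Definition partition_fn : R := \sum_(x : {ffun 'I_n -> bool}) \sum_(y : {ffun 'I_m -> bool}) weight x y.

Definition probX (x : {ffun 'I_n -> bool}) : R :=
  (\sum_(y : {ffun 'I_m -> bool}) weight x y) / partition_fn.

Definition agrees (A : {set 'I_n}) (a x : {ffun 'I_n -> bool}) : bool :=
  [forall i in A, x i == a i].

Definition probE (A : {set 'I_n}) (a : {ffun 'I_n -> bool}) : R :=
  \sum_(x : {ffun 'I_n -> bool} | agrees A a x) probX x.

Definition condP (A S : {set 'I_n}) (a : {ffun 'I_n -> bool}) : R :=
  probE (A :|: S) a / probE S a.

(* nu_{u,I|S}(x_u, x_I | x_S), assignments read off from a single a *)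
Definition nu (u : 'I_n) (I S : {set 'I_n}) (a : {ffun 'I_n -> bool}) : R :=
  `| condP ([set u] :|: I) S a - condP [set u] S a * condP I S a |.

Definition lambda_num (S : {set 'I_n}) (a : {ffun 'I_n -> bool}) (q : {ffun 'I_m -> bool}) : R :=
  expR (\sum_(j < m) g j * spin (q j))
  * (\prod_(i in S) expR (spin (a i) * field i q))
  * (\prod_(i in ~: S) cosh (field i q)).

Definition lambda (S : {set 'I_n}) (a : {ffun 'I_n -> bool}) (q : {ffun 'I_m -> bool}) : R :=
  lambda_num S a q / \sum_(q' : {ffun 'I_m -> bool}) lambda_num S a q'.

Definition fbar (u : 'I_n) (S : {set 'I_n}) (a : {ffun 'I_n -> bool}) (q : {ffun 'I_m -> bool}) : R :=
  lambda S a q *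
  (sigmoid (2 * spin (a u) * field u q)
   - \sum_(q' : {ffun 'I_m -> bool}) lambda S a q' * sigmoid (2 * spin (a u) * field u q')).

End RBM.

(* Main.v *)
Require Import Defs.
From HB Require Import structures.
From mathcomp Require Import all_boot all_order all_algebra.
From mathcomp Require Import all_classical all_reals all_analysis.
From mathcomp Require Import ring lra.
Import Order.TTheory GRing.Theory Num.Theory.
Local Open Scope ring_scope.

Section Proof.
Variable R : realType.
Variables (n m : nat) (J : 'I_n -> 'I_m -> R) (h : 'I_n -> R) (g : 'I_m -> R).
Local Notation F := {ffun 'I_n -> bool}.
Local Notation Q := {ffun 'I_m -> bool}.
Local Notation fld := (field J h).

Definition fac (B : {set 'I_n}) (a : F) (y : Q) (i : 'I_n) : R :=
  if i \in B then expR (spin R (a i) * fld i y)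
  else expR (fld i y) + expR (- fld i y).

Definition sg (a : F) (y : Q) (i : 'I_n) : R := sigmoid (2 * spin R (a i) * fld i y).

Lemma sum_pos (T : finType) (t0 : T) (H : T -> R) : (forall y, 0 < H y) -> 0 < \sum_y H y.
Proof.
move=> Hp; rewrite (bigD1 t0) //=.
apply: (lt_le_trans (Hp t0)); rewrite lerDl; apply: sumr_ge0 => y _; exact: ltW.
Qed.

Lemma weightE x y : weight J h g x y =
  expR (\sum_(j < m) g j * spin R (y j)) * \prod_(i < n) expR (spin R (x i) * fld i y).
Proof.
rewrite /weight -expR_sum -expRD addrC; congr expR; congr (_ + _).
rewrite -big_split /=; apply: eq_bigr => i _.
rewrite /field mulrDr mulr_sumr (mulrC (h i)); congr (_ + _).
by apply: eq_bigr => j _; rewrite mulrA.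
Qed.

Lemma sum_agrees B a y : \sum_(x | agrees B a x) weight J h g x y =
  expR (\sum_(j < m) g j * spin R (y j)) * \prod_(i < n) fac B a y i.
Proof.
under eq_bigr do rewrite weightE.
rewrite -mulr_sumr; congr (_ * _).
pose G := fun i (b : bool) => if i \in B then (b == a i)%:R * expR (spin R b * fld i y)
   else expR (spin R b * fld i y).
transitivity (\sum_(x : F) \prod_(i < n) G i (x i)).
  rewrite big_mkcond; apply: eq_bigr => x _.
  case: (boolP (agrees B a x)) => H.
    apply: eq_bigr => i _; rewrite /G; case: ifP => // iB.
    by move/forallP: H => /(_ i); rewrite iB /= => /eqP ->; rewrite eqxx mul1r.
  move/forallPn: H => [i]; rewrite negb_imply => /andP[iB xi].
  by rewrite (bigD1 i) //= /G iB (negbTE xi) mul0r mul0r.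
rewrite -(bigA_distr_bigA (fun i b => G i b)); apply: eq_bigr => i _.
rewrite big_bool /G /fac; case: ifP => iB.
  by case: (a i); rewrite /= ?mulr1n ?mulr0n ?mul1r ?mul0r ?addr0 ?add0r.
by rewrite /spin mul1r mulN1r.
Qed.

Lemma probEE B a : probE J h g B a =
  (\sum_(y : Q) expR (\sum_(j < m) g j * spin R (y j)) * \prod_(i < n) fac B a y i)
  / partition_fn J h g.
Proof.
rewrite /probE /probX -mulr_suml exchange_big /=; congr (_ / _).
by apply: eq_bigr => y _; rewrite sum_agrees.
Qed.

Lemma key b f : expR (spin R b * f) = (expR f + expR (- f)) * sigmoid (2 * spin R b * f).
Proof.
have x0 : 0 < expR f by apply: expR_gt0.
case: b; rewrite /spin /sigmoid.
  have -> : - (2 * 1 * f) = - f + - f by ring.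
  have -> : 1 * f = f by ring.
  rewrite expRD expRN.
  have p : 0 < 1 + (expR f)^-1 * (expR f)^-1.
    by rewrite addr_gt0 // mulr_gt0 // invr_gt0.
  field; rewrite ?gt_eqF //.
have -> : - (2 * -1 * f) = f + f by ring.
have -> : -1 * f = - f by ring.
rewrite expRD expRN.
have p : 0 < 1 + expR f * expR f by rewrite addr_gt0 // mulr_gt0.
field; rewrite ?gt_eqF //.
Qed.

Lemma fac_split (A S : {set 'I_n}) a (y : Q) : [disjoint A & S] ->
  \prod_(i < n) fac (A :|: S) a y i = (\prod_(i < n) fac S a y i) * \prod_(i in A) sg a y i.
Proof.
move=> dAS.
rewrite [X in _ * X]big_mkcond -big_split /=; apply: eq_bigr => i _.
rewrite /fac inE; case: (boolP (i \in A)) => iA /=.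
  rewrite (disjointFr dAS iA) /sg /sigmoid.
  exact: key.
by rewrite mulr1.
Qed.

Lemma facS S a (y : Q) : expR (\sum_(j < m) g j * spin R (y j)) * \prod_(i < n) fac S a y i
  = (\prod_(i in ~: S) (2:R)) * lambda_num J h g S a y.
Proof.
rewrite (bigID (mem S)) /= /lambda_num.
have -> : \prod_(i in ~: S) cosh (fld i y) = \prod_(i | i \notin S) cosh (fld i y).
  by apply: eq_bigl => i; rewrite inE.
have -> : \prod_(i in ~: S) (2:R) = \prod_(i | i \notin S) (2:R).
  by apply: eq_bigl => i; rewrite inE.
have -> : \prod_(i | i \notin S) fac S a y i = \prod_(i | i \notin S) (2 * cosh (fld i y)).
  by apply: eq_bigr => i /negbTE iS; rewrite /fac iS /cosh mulrC divfK // pnatr_eq0.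
have -> : \prod_(i in S) fac S a y i = \prod_(i in S) expR (spin R (a i) * fld i y).
  by apply: eq_bigr => i iS; rewrite /fac iS.
rewrite big_split /=; ring.
Qed.

Lemma condPE (B S : {set 'I_n}) (a : F) : [disjoint B & S] -> condP J h g B S a =
  \sum_(y : Q) lambda J h g S a y * \prod_(i in B) sg a y i.
Proof.
move=> dBS.
have Z0 : 0 < partition_fn J h g.
  apply: (@sum_pos F [ffun => false] (fun x => \sum_(y : Q) weight J h g x y)) => x.
  apply: (@sum_pos Q [ffun => false] (fun y => weight J h g x y)) => y.
  exact: expR_gt0.
have c0 : 0 < \prod_(i in ~: S) (2:R) by apply: prodr_gt0.
have Y0 : 0 < \sum_(q : Q) lambda_num J h g S a q.
  apply: (@sum_pos Q [ffun => false] (fun y => lambda_num J h g S a y)) => y; rewrite /lambda_num.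
  apply: mulr_gt0; [apply: mulr_gt0; [exact: expR_gt0 | apply: prodr_gt0 => i _; exact: expR_gt0] |].
  by apply: prodr_gt0 => i _; rewrite /cosh divr_gt0 // addr_gt0 // expR_gt0.
rewrite /condP !probEE.
have -> : \sum_(y : Q) expR (\sum_(j < m) g j * spin R (y j)) * \prod_(i < n) fac (B :|: S) a y i
   = (\prod_(i in ~: S) (2:R)) * \sum_(y : Q) lambda_num J h g S a y * \prod_(i in B) sg a y i.
  by rewrite mulr_sumr; apply: eq_bigr => y _; rewrite fac_split // mulrA facS mulrA.
have -> : \sum_(y : Q) expR (\sum_(j < m) g j * spin R (y j)) * \prod_(i < n) fac S a y i
   = (\prod_(i in ~: S) (2:R)) * \sum_(y : Q) lambda_num J h g S a y.
  by rewrite mulr_sumr; apply: eq_bigr => y _; rewrite facS.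
have -> : \sum_(y : Q) lambda J h g S a y * \prod_(i in B) sg a y i =
  (\sum_(y : Q) lambda_num J h g S a y * \prod_(i in B) sg a y i) / \sum_(q : Q) lambda_num J h g S a q.
  by rewrite mulr_suml; apply: eq_bigr => y _; rewrite /lambda mulrAC.
field; rewrite ?gt_eqF //.
Qed.

End Proof.

Theorem lemma7 (R : realType) (n m : nat)
  (J : 'I_n -> 'I_m -> R) (h : 'I_n -> R) (g : 'I_m -> R)
  (u : 'I_n) (I S : {set 'I_n}) (a : {ffun 'I_n -> bool}) :
  u \notin I -> u \notin S -> [disjoint I & S] ->
  nu J h g u I S a =
  `| \sum_(q : {ffun 'I_m -> bool})
       fbar J h g u S a q * \prod_(i in I) sigmoid (2 * spin R (a i) * field J h i q) |.
Proof.
move=> uI uS dIS.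
have dU : [disjoint [set u] :|: I & S].
  by rewrite -finset.setI_eq0 finset.setIUl finset.setU_eq0 !finset.setI_eq0 disjoints1 uS dIS.
have d1 : [disjoint [set u] & S] by rewrite disjoints1.
rewrite /nu !condPE //.
under eq_bigr do rewrite big_setU1 //=.
under [X in _ - X * _]eq_bigr do rewrite big_set1.
rewrite /sg.
congr (Num.norm _); rewrite /fbar.
under [RHS]eq_bigr do rewrite mulrBr mulrBl.
rewrite sumrB; congr (_ - _).
  by apply: eq_bigr => y _; rewrite mulrA.
by rewrite mulr_sumr; apply: eq_bigr => y _; rewrite mulrCA mulrA.
Qed.
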